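(* Consider an $s$-stage Runge--Kutta method with coefficients $a_{ij}$, $b_i$ ($i,j=1,\dots,s$). If \[ a_{ij}a_{ik} - a_{ij}a_{jk} - a_{ik}a_{kj} = 0\qquad\text{for all } i,j,k\text{ with } j\neq k, \tag{P} \] then, up to a permutation of the stages (i.e. there is a permutation $\sigma$ of $\{1,\dots,s\}$ such that the coefficients $a_{\sigma(i)\sigma(j)}, b_{\sigma(i)}$ define the method), the method is an explicit Runge--Kutta method or a DIRK method. Consequently, a Runge--Kutta method with all $b_i\neq0$ is quadratic projectable if and only if, up to a permutation of its stages, it is a SyDIRK method.
   Context: A Runge--Kutta method with coefficients $a_{ij},b_i$ with $a_{ij}=0$ whenever $j>i$ is called explicit if $a_{ii}=0$ for all $i$, and diagonally implicit (DIRK) otherwise. A Runge--Kutta method is quadratic projectable if it satisfies both $b_ib_j - b_ia_{ij} - b_ja_{ji}=0$ for all $i,j=1,\dots,s$, and condition (P). A symplectic diagonally implicit Runge--Kutta (SyDIRK) method is one whose coefficients are $a_{ij}=b_j$ for $j<i$, $a_{ii}=b_i/2$, $a_{ij}=0$ for $j>i$, for given nonzero $b_1,\dots,b_s$. *)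

(* Defs.v *)
(* Runge--Kutta coefficients over a real field R,
   stages indexed by 'I_s (stage i+1 of the paper is index i). *)
From HB Require Import structures.
From mathcomp Require Import all_boot all_order all_algebra all_fingroup.
Set Implicit Arguments. Unset Strict Implicit. Unset Printing Implicit Defensive.
Import Order.TTheory GRing.Theory Num.Theory.
Local Open Scope ring_scope.

Section RK.
Variables (R : realFieldType) (s : nat).

Definition condP (a : 'I_s -> 'I_s -> R) : Prop :=
  forall i j k : 'I_s, j != k ->
    a i j * a i k - a i j * a j k - a i k * a k j = 0.

Definition lower_tri (a : 'I_s -> 'I_s -> R) : Prop :=
  forall i j : 'I_s, (i < j)%N -> a i j = 0.

Definition explicitRK (a : 'I_s -> 'I_s -> R) : Prop :=
  lower_tri a /\ (forall i, a i i = 0).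

Definition DIRK (a : 'I_s -> 'I_s -> R) : Prop :=
  lower_tri a /\ ~ (forall i, a i i = 0).

Definition perm_a (a : 'I_s -> 'I_s -> R) (sg : 'S_s) : 'I_s -> 'I_s -> R :=
  fun i j => a (sg i) (sg j).
Definition perm_b (b : 'I_s -> R) (sg : 'S_s) : 'I_s -> R :=
  fun i => b (sg i).

Definition quad_projectable (a : 'I_s -> 'I_s -> R) (b : 'I_s -> R) : Prop :=
  (forall i j : 'I_s, b i * b j - b i * a i j - b j * a j i = 0) /\ condP a.

Definition SyDIRK (a : 'I_s -> 'I_s -> R) (b : 'I_s -> R) : Prop :=
  (forall i, b i != 0) /\
  forall i j : 'I_s,
    a i j = (if (j < i)%N then b j else if i == j then b i / 2 else 0).

End RK.

(* Main.v *)
Require Import Defs.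
From mathcomp Require Import all_boot all_order all_algebra all_fingroup.
From mathcomp Require Import zify ring lra.
Import GRing.Theory Num.Theory.
Local Open Scope ring_scope.
Set Implicit Arguments.
Unset Strict Implicit.

Section Aux.
Variables (R : realFieldType) (s : nat) (a : 'I_s -> 'I_s -> R).
Hypothesis hP : condP a.

Lemma no2 x y : x != y -> a x y * a y x = 0.
Proof. move=> nxy; have := @hP x x y nxy; move=> h; apply/eqP; rewrite -oppr_eq0; apply/eqP; rewrite -[RHS]h; ring. Qed.

Lemma trans3 x y z : a x y != 0 -> a y z != 0 -> y != z -> a x z != 0.
Proof.
move=> h1 h2 nyz; apply/eqP=> h3; have := @hP x y z nyz; rewrite h3.
move=> h; have : - (a x y * a y z) = 0 by rewrite -[RHS]h; ring.
by move/eqP; rewrite oppr_eq0 mulf_eq0 (negPf h1) (negPf h2).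
Qed.

Definition dep x := [set y | (y != x) && (a x y != 0)].
Definition rk x := #|dep x|.

Lemma rk_lt x y : x != y -> a x y != 0 -> (rk y < rk x)%N.
Proof.
move=> nxy axy; apply: proper_card; apply/properP; split.
  apply/subsetP=> z; rewrite !inE => /andP[nzy ayz].
  have nyz : y != z by rewrite eq_sym.
  have axz := trans3 axy ayz nyz.
  rewrite axz andbT; apply/eqP=> ezx; move: ayz; rewrite ezx => ayx.
  by move/eqP: (no2 nxy); rewrite mulf_eq0 (negPf axy) (negPf ayx).
by exists y; rewrite !inE ?eqxx // eq_sym nxy axy.
Qed.

Definition key (x : 'I_s) := (rk x * s + x)%N.

Lemma key_inj x y : key x = key y -> x = y.
Proof.
move=> h; apply: val_inj; have := congr1 (modn^~ s) h.
by rewrite /key !modnMDl !modn_small.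
Qed.

Lemma key_lt x y : (rk y < rk x)%N -> (key y < key x)%N.
Proof. move=> h; rewrite /key; have := ltn_ord y; nia. Qed.

Definition f x := #|[set y | (key y < key x)%N]|.

Lemma f_lt x : (f x < s)%N.
Proof.
rewrite -[s in (_ < s)%N]card_ord; apply: proper_card; apply/properP; split.
  by apply/subsetP.
by exists x => //; rewrite inE ltnn.
Qed.

Lemma f_mono x y : (key x < key y)%N -> (f x < f y)%N.
Proof.
move=> h; apply: proper_card; apply/properP; split.
  by apply/subsetP=> z; rewrite !inE => /ltn_trans; apply.
by exists x; rewrite !inE ?ltnn.
Qed.

Definition F x : 'I_s := Ordinal (f_lt x).

Lemma F_inj : injective F.
Proof.
move=> x y /(congr1 val) /= h; apply: key_inj.
case: (ltngtP (key x) (key y)) => // /f_mono; rewrite h ltnn //.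
Qed.

Lemma part1 : exists sg : 'S_s, lower_tri (perm_a a sg).
Proof.
exists (perm F_inj)^-1%g => i j ij; rewrite /perm_a.
set x := _ i; set y := _ j.
have ex : F x = i by rewrite /x -[F _](permE F_inj) permKV.
have ey : F y = j by rewrite /y -[F _](permE F_inj) permKV.
apply/eqP; apply: contraT => axy.
have nxy : x != y by apply: contraTneq ij => exy; rewrite -ex -ey exy ltnn.
have := f_mono (key_lt (rk_lt nxy axy)).
have -> : f y = j by rewrite -ey.
have -> : f x = i by rewrite -ex.
by rewrite ltnNge ltnW.
Qed.

End Aux.

Lemma oltF n (i j : 'I_n) : (i < j)%N -> (i == j) = false.
Proof. by move=> h; rewrite -val_eqE /= ltn_eqF. Qed.
Lemma ogtF n (i j : 'I_n) : (j < i)%N -> (i == j) = false.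
Proof. by move=> h; rewrite -val_eqE /= gtn_eqF. Qed.


Theorem theorem2p7 (R : realFieldType) (s : nat) :
  (forall (a : 'I_s -> 'I_s -> R),
      condP a ->
      exists sg : 'S_s, explicitRK (perm_a a sg) \/ DIRK (perm_a a sg))
  /\
  (forall (a : 'I_s -> 'I_s -> R) (b : 'I_s -> R),
      (forall i, b i != 0) ->
      (quad_projectable a b <->
       exists sg : 'S_s, SyDIRK (perm_a a sg) (perm_b b sg))).
Proof.
split.
  move=> a hP; have [sg hl] := part1 hP; exists sg.
  case: (boolP [forall i, perm_a a sg i i == 0]) => [/forallP h|h].
    by left; split => // i; apply/eqP.
  right; split => // hall; move/negP: h; apply; apply/forallP=> i.
  by apply/eqP.
move=> a b hb; split.
  case=> hS hP; have [sg hl] := part1 hP; exists sg; split.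
    by move=> i; apply: hb.
  move=> i j; rewrite /perm_a /perm_b.
  have hij := hS (sg i) (sg j).
  case: (ltngtP j i) => [ji|ij|/val_inj eij].
  - move: (hl _ _ ji); rewrite /perm_a => h0; rewrite h0 mulr0 subr0 in hij.
    apply: (mulfI (hb (sg i))); rewrite -[RHS]subr0 -hij; ring.
  - by move: (hl i j ij); rewrite /perm_a (oltF ij) => ->.
  - rewrite -eij eqxx; rewrite -eij in hij.
    have h2 : b (sg j) * (b (sg j) - 2 * a (sg j) (sg j)) = 0.
      by rewrite -[RHS]hij; ring.
    move/eqP: h2; rewrite mulf_eq0 (negPf (hb _)) /= subr_eq0 => /eqP ->.
    by field.
case=> sg [_ hA]; rewrite /perm_a /perm_b in hA.
have hA' : forall i j, a i j = (if ((sg^-1)%g j < (sg^-1)%g i)%N then b j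
    else if (sg^-1)%g i == (sg^-1)%g j then b i / 2 else 0).
  by move=> i j; have := hA ((sg^-1)%g i) ((sg^-1)%g j); rewrite !permKV.
split.
  move=> i j; rewrite !hA'.
  case: (ltngtP ((sg^-1)%g j) ((sg^-1)%g i)) => [ji|ij|eij].
  - rewrite (oltF ji); ring.
  - rewrite (oltF ij); ring.
  - have ej : i = j by apply: (@perm_inj _ (sg^-1)%g); apply: val_inj.
    by rewrite ej eqxx; field.
move=> i j k njk; rewrite !hA'.
set I := (sg^-1)%g i; set J := (sg^-1)%g j; set K := (sg^-1)%g k.
have nJK : J != K by rewrite (inj_eq (@perm_inj _ _)).
have nKJ : K != J by rewrite eq_sym.
rewrite (negPf nJK) (negPf nKJ).
case: (ltngtP J K) => [jk|kj|/val_inj e]; last by rewrite e eqxx in nJK.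
- case: (ltngtP K I) => [ki|ik|/val_inj ki].
  + by rewrite (ltn_trans jk ki); ring.
  + rewrite (oltF ik); ring.
  + rewrite -ki jk eqxx; ring.
- case: (ltngtP J I) => [ji|ij|/val_inj ji].
  + by rewrite (ltn_trans kj ji); ring.
  + rewrite (oltF ij); ring.
  + rewrite -ji kj eqxx; ring.
Qed.
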